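(* Let $S$ be a (left and right) Ore set in a ring $R$. Then there exists a pair $(Q,f)$, with $Q$ a ring and $f:R\to Q$ a ring homomorphism, such that (i) $f(s)$ is a unit of $Q$ for all $s\in S$, and for every pair $(Q',f')$ satisfying (i) there is a unique ring homomorphism $h:Q\to Q'$ with $f'=hf$. The ring $Q$ is unique up to isomorphism and is isomorphic to the localization of $R/\mathfrak p(S)$ at $\pi(S)$, where $\pi:R\to R/\mathfrak p(S)$ is the canonical map and $\pi(S)$ is a left and right denominator set of $R/\mathfrak p(S)$ consisting of regular elements.
   Context: Rings are associative with $1$. A multiplicatively closed subset $S$ ($1\in S$, $0\notin S$) is an Ore set if $Sr\cap Rs\ne\emptyset$ and $rS\cap sR\ne\emptyset$ for all $r\in R,s\in S$; a (left and right) denominator set is an Ore set such that $rs=0$ ($s\in S$) implies $tr=0$ for some $t\in S$ and $sr=0$ implies $rt=0$ for some $t\in S$. For a ring $B$ and $T\subseteq B$, $\mathrm{ass}_l(T,B):=\{b\mid tb=0\text{ for some }t\in T\}$, $\mathrm{ass}_r(T,B):=\{b\mid bt=0\text{ for some }t\in T\}$. Define ideals $\mathfrak p_\alpha$ ($\alpha\ge1$ ordinals): $\mathfrak p_1:=\mathrm{ass}_l(S,R)+\mathrm{ass}_r(S,R)$; $\mathfrak p_{\alpha+1}:=\pi_\alpha^{-1}(\mathrm{ass}_l(\pi_\alpha(S),R/\mathfrak p_\alpha)+\mathrm{ass}_r(\pi_\alpha(S),R/\mathfrak p_\alpha))$ with $\pi_\alpha:R\to R/\mathfrak p_\alpha$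 canonical; $\mathfrak p_\alpha:=\bigcup_{\beta<\alpha}\mathfrak p_\beta$ for limit $\alpha$; $\mathfrak p(S):=\bigcup_\alpha\mathfrak p_\alpha$. *)

(* Defs.v *)
(* Rings: associative with 1, not necessarily commutative
   (pzRingType allows the zero ring). Subsets of a ring are Prop-predicates. *)
From HB Require Import structures.
From mathcomp Require Import all_boot all_algebra.
Set Implicit Arguments. Unset Strict Implicit. Unset Printing Implicit Defensive.
Import GRing.Theory.
Local Open Scope ring_scope.

Definition is_unit (Q : pzRingType) (u : Q) : Prop :=
  exists v : Q, u * v = 1 /\ v * u = 1.

Definition mult_closed (R : pzRingType) (S : R -> Prop) : Prop :=
  [/\ S 1, ~ S 0 & forall s t, S s -> S t -> S (s * t)].

Definition ore_set (R : pzRingType) (S : R -> Prop) : Prop :=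
  mult_closed S /\
  forall (r s : R), S s ->
    (exists s' r', S s' /\ s' * r = r' * s) /\
    (exists s' r', S s' /\ r * s' = s * r').

Definition denominator_set (R : pzRingType) (S : R -> Prop) : Prop :=
  ore_set S /\
  forall (r s : R), S s ->
    (r * s = 0 -> exists t, S t /\ t * r = 0) /\
    (s * r = 0 -> exists t, S t /\ r * t = 0).

Definition regular (R : pzRingType) (a : R) : Prop :=
  forall x : R, (a * x = 0 -> x = 0) /\ (x * a = 0 -> x = 0).

(* The ideal p(S) = \bigcup_alpha p_alpha.  It is encoded as the least subset
   containing 0 = p_0 and closed under the successor step
     p_{alpha+1} = pi_alpha^{-1}(ass_l(pi_alpha S) + ass_r(pi_alpha S)),
   i.e. x is added when x = a + b modulo the current set, with s a and b t in
   the current set for some s, t in S.  The least such set is the union of the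
   transfinite chain (limits are unions). *)
Inductive pS (R : pzRingType) (S : R -> Prop) : R -> Prop :=
| pS_zero : pS S 0
| pS_step (x a b s t : R) :
    S s -> S t -> pS S (x - (a + b)) -> pS S (s * a) -> pS S (b * t) ->
    pS S x.

Definition S_inverting (R : pzRingType) (S : R -> Prop) (Q : pzRingType)
  (f : {rmorphism R -> Q}) : Prop :=
  forall s, S s -> is_unit (f s).

Definition universal_S_inverting (R : pzRingType) (S : R -> Prop)
  (Q : pzRingType) (f : {rmorphism R -> Q}) : Prop :=
  S_inverting S f /\
  forall (Q' : pzRingType) (f' : {rmorphism R -> Q'}), S_inverting S f' ->
    exists h : {rmorphism Q -> Q'},
      (forall r, f' r = h (f r)) /\
      (forall h' : {rmorphism Q -> Q'}, (forall r, f' r = h' (f r)) ->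
         forall q, h' q = h q).

Definition ring_isomorphic (Q Q' : pzRingType) : Prop :=
  exists h : {rmorphism Q -> Q'}, bijective h.

Definition is_localization (A : pzRingType) (T : A -> Prop) (B : pzRingType)
  (phi : {rmorphism A -> B}) : Prop :=
  [/\ forall t, T t -> is_unit (phi t),
      forall b : B, exists a t u, [/\ T t, phi t * u = 1, u * phi t = 1 &
                                      b = phi a * u],
      forall b : B, exists a t u, [/\ T t, phi t * u = 1, u * phi t = 1 &
                                      b = u * phi a],
      forall a, phi a = 0 <-> exists t, T t /\ a * t = 0 &
      forall a, phi a = 0 <-> exists t, T t /\ t * a = 0].

Definition image_of (R A : Type) (g : R -> A) (S : R -> Prop) : A -> Prop :=
  fun a => exists s, S s /\ g s = a.

(* Main.v *)
From HB Require Import structures.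
From mathcomp Require Import all_boot all_algebra.
From mathcomp Require Import boolp.
Require Import Defs.
Import GRing.Theory.
Set Implicit Arguments. Unset Strict Implicit.
Local Open Scope ring_scope.

Section Loc.
Variables (R : pzRingType) (S : R -> Prop).
Hypothesis HS : ore_set S.
Local Notation I := (pS S).

Lemma S1 : S 1. Proof. by case: HS => -[]. Qed.
Lemma Sn0 : ~ S 0. Proof. by case: HS => -[]. Qed.
Lemma SM {s t} : S s -> S t -> S (s * t). Proof. by case: HS => -[] _ _ H _; apply: H. Qed.
Lemma oreL r {s} : S s -> exists s' r', S s' /\ s' * r = r' * s.
Proof. by case: HS => _ H Hs; case: (H r s Hs). Qed.
Lemma oreR r {s} : S s -> exists s' r', S s' /\ r * s' = s * r'.
Proof. by case: HS => _ H Hs; case: (H r s Hs). Qed.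

Lemma I0 : I 0. Proof. exact: pS_zero. Qed.

Lemma ID {x y} : I x -> I y -> I (x + y).
Proof.
move=> Hx Hy; apply: (@pS_step _ _ _ x y 1 1 S1 S1).
- by rewrite subrr; exact: pS_zero.
- by rewrite mul1r.
- by rewrite mulr1.
Qed.

Lemma IMl {x} : I x -> forall r, I (r * x).
Proof.
move=> Hx; elim: Hx => {x} [r|x a b s t Ss St _ IH1 _ IH2 _ IH3 r]; first by rewrite mulr0; exact: pS_zero.
have [s' [r' [Ss' E]]] := oreL r Ss.
apply: (@pS_step _ _ _ (r * a) (r * b) s' t Ss' St).
- by rewrite -mulrDr -mulrBr; apply: IH1.
- by rewrite mulrA E -mulrA; apply: IH2.
- by rewrite -mulrA; apply: IH3.
Qed.

Lemma IMr {x} : I x -> forall r, I (x * r).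
Proof.
move=> Hx; elim: Hx => {x} [r|x a b s t Ss St _ IH1 _ IH2 _ IH3 r]; first by rewrite mul0r; exact: pS_zero.
have [t' [r' [St' E]]] := oreR r St.
apply: (@pS_step _ _ _ (a * r) (b * r) s t' Ss St').
- by rewrite -mulrDl -mulrBl; apply: IH1.
- by rewrite mulrA; apply: IH2.
- by rewrite -mulrA E mulrA; apply: IH3.
Qed.

Lemma IN {x} : I x -> I (- x).
Proof. by move=> H; rewrite -mulN1r; apply: IMl. Qed.

Lemma IB {x y} : I x -> I y -> I (x - y).
Proof. by move=> Hx Hy; apply: ID => //; apply: IN. Qed.

Lemma Iregl {s x} : S s -> I (s * x) -> I x.
Proof.
move=> Ss H; apply: (@pS_step _ _ _ x 0 s 1 Ss S1) => //.
- by rewrite addr0 subrr; exact: pS_zero.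
- by rewrite mul0r; exact: pS_zero.
Qed.

Lemma Iregr {s x} : S s -> I (x * s) -> I x.
Proof.
move=> Ss H; apply: (@pS_step _ _ _ 0 x 1 s S1 Ss) => //.
- by rewrite add0r subrr; exact: pS_zero.
- by rewrite mulr0; exact: pS_zero.
Qed.

Lemma cml {s1 s2} : S s1 -> S s2 -> exists u al be, [/\ S u, u = al * s1 & u = be * s2].
Proof.
move=> H1 H2; have [s' [r' [Ss' E]]] := oreL s1 H2.
by exists (s' * s1), s', r'; split => //; apply: SM.
Qed.

Lemma cmr {s1 s2} : S s1 -> S s2 -> exists v al be, [/\ S v, v = s1 * al & v = s2 * be].
Proof.
move=> H1 H2; have [s' [r' [Ss' E]]] := oreR s1 H2.
by exists (s1 * s'), s', r'; split => //; apply: SM.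
Qed.

Lemma sandw (al u y v be : R) : u * y * v = 0 -> (al * u) * y * (v * be) = 0.
Proof.
move=> H; have -> : (al * u) * y * (v * be) = al * (u * y * v) * be by rewrite !mulrA.
by rewrite H mulr0 mul0r.
Qed.

Lemma Iinv x : I x -> exists u v, [/\ S u, S v & u * x * v = 0].
Proof.
move=> Hx; elim: Hx => {x} [|x a b s t Ss St _ [u1 [v1 [Su1 Sv1 H1]]] _ [u2 [v2 [Su2 Sv2 H2]]]
  _ [u3 [v3 [Su3 Sv3 H3]]]].
  by exists 1, 1; split; rewrite ?mulr0 ?mul0r //; exact: S1.
have [u12 [al1 [be1 [Su12 Eu1 Eu2]]]] := cml Su1 (SM Su2 Ss).
have [u [ga [de [Su Eu Eu3]]]] := cml Su12 Su3.
have [v12 [al1' [be1' [Sv12 Ev1 Ev2]]]] := cmr Sv1 Sv2.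
have [v [ga' [de' [Sv Ev Ev3]]]] := cmr Sv12 (SM St Sv3).
exists u, v; split => //.
have h1 : u * (x - (a + b)) * v = 0.
  rewrite {1}Eu Eu1 Ev Ev1.
  have -> : ga * (al1 * u1) * (x - (a + b)) * (v1 * al1' * ga')
     = (ga * al1) * u1 * (x - (a + b)) * (v1 * (al1' * ga')) by rewrite !mulrA.
  by apply: sandw.
have h2 : u * a * v = 0.
  rewrite {1}Eu Eu2 Ev Ev2.
  have -> : ga * ((be1 * (u2 * s))) * a * (v2 * be1' * ga')
     = (ga * be1) * u2 * (s * a) * (v2 * (be1' * ga')) by rewrite !mulrA.
  by apply: sandw.
have h3 : u * b * v = 0.
  rewrite Eu3 Ev3.
  have -> : de * u3 * b * (t * v3 * de') = de * u3 * (b * t) * (v3 * de') by rewrite !mulrA.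
  by apply: sandw.
have -> : u * x * v = u * (x - (a + b)) * v + u * a * v + u * b * v
  by rewrite -!mulrDl -!mulrDr -addrA subrK.
by rewrite h1 h2 h3 !addr0.
Qed.

Lemma SnI s : S s -> ~ I s.
Proof.
move=> Ss /Iinv [u [v [Su Sv H]]]; apply: Sn0; rewrite -H; do 2!apply: SM => //.
Qed.


Lemma Ieq {x y} : x = y -> I (x - y). Proof. by move=> ->; rewrite subrr; exact: I0. Qed.
Lemma Isym {x y} : I (x - y) -> I (y - x). Proof. by move=> H; rewrite -opprB; apply: IN. Qed.
Lemma Itrans {x y z} : I (x - y) -> I (y - z) -> I (x - z).
Proof. by move=> H1 H2; have := ID H1 H2; rewrite addrA subrK. Qed.
Lemma Icl r x y : I (x - y) -> I (r * x - r * y). Proof. by move=> H; rewrite -mulrBr; apply: IMl. Qed.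
Lemma Icr r x y : I (x - y) -> I (x * r - y * r). Proof. by move=> H; rewrite -mulrBl; apply: IMr. Qed.
Lemma IDD {x1 y1 x2 y2} : I (x1 - y1) -> I (x2 - y2) -> I ((x1 + x2) - (y1 + y2)).
Proof. by move=> H1 H2; rewrite opprD addrACA; apply: ID. Qed.
Lemma INN {x y} : I (x - y) -> I (- x - - y). Proof. by move=> H; rewrite -opprD; apply: IN. Qed.
Lemma Iregl' {s x y} : S s -> I (s * x - s * y) -> I (x - y).
Proof. by move=> Ss H; apply: (Iregl Ss); rewrite mulrBr. Qed.
Lemma Iregr' {s x y} : S s -> I (x * s - y * s) -> I (x - y).
Proof. by move=> Ss H; apply: (Iregr Ss); rewrite mulrBl. Qed.

Definition E4 a s b u := forall c d, I (s * c - u * d) -> I (a * c - b * d).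

Lemma E4_refl a s : S s -> E4 a s a s.
Proof. by move=> Ss c d H; apply: Icl; apply: (Iregl' Ss). Qed.
Lemma E4_sym a s b u : E4 a s b u -> E4 b u a s.
Proof. by move=> H c d Hcd; apply: Isym; apply: H; apply: Isym. Qed.
Lemma E4_trans a s b u e w : S u -> E4 a s b u -> E4 b u e w -> E4 a s e w.
Proof.
move=> Su H1 H2 c d Hcd.
have [x [y [Sx Exy]]] := oreR (s * c) Su.
have h1 : I (a * (c * x) - b * y) by apply: H1; rewrite mulrA Exy; apply: Ieq.
have h2 : I (b * y - e * (d * x)).
  by apply: H2; rewrite -Exy !mulrA -mulrBl; apply: IMr.
apply: (Iregr' Sx); rewrite -!mulrA; exact: Itrans h1 h2.
Qed.

Definition nrm (p : R * R) : R * R := if `[< S p.2 >] then p else (p.1, 1).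
Lemma nrm_good p : S (nrm p).2.
Proof. by rewrite /nrm; case: asboolP => // _; exact: S1. Qed.
Lemma nrm_id p : S p.2 -> nrm p = p.
Proof. by rewrite /nrm; case: asboolP. Qed.
Lemma nrm_nrm p : nrm (nrm p) = nrm p.
Proof. exact: nrm_id (nrm_good p). Qed.

Definition eqv (p q : R * R) : bool := `[< E4 (nrm p).1 (nrm p).2 (nrm q).1 (nrm q).2 >].
Lemma eqv_refl : reflexive eqv.
Proof. by move=> p; apply/asboolP; apply: E4_refl; exact: nrm_good. Qed.
Lemma eqv_sym : symmetric eqv.
Proof. by move=> p q; apply/asboolP/asboolP; apply: E4_sym. Qed.
Lemma eqv_trans : transitive eqv.
Proof.
move=> q p r /asboolP H1 /asboolP H2; apply/asboolP.
exact: E4_trans (nrm_good q) H1 H2.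
Qed.
Definition eqvR : equiv_rel (R * R) := EquivRel eqv eqv_refl eqv_sym eqv_trans.

Definition Ep (p q : R * R) := E4 p.1 p.2 q.1 q.2.

Definition choose2 (P : R * R -> Prop) : R * R :=
  match pselect (exists x, P x) with left H => proj1_sig (cid H) | right _ => (0, 0) end.
Lemma choose2P P : (exists x, P x) -> P (choose2 P).
Proof. by rewrite /choose2; case: pselect => // H _; exact: proj2_sig (cid H). Qed.

Definition addw s u := choose2 (fun cd => s * cd.1 = u * cd.2 /\ S (s * cd.1)).
Lemma addwP s u : S s -> S u -> s * (addw s u).1 = u * (addw s u).2 /\ S (s * (addw s u).1).
Proof.
move=> Ss Su; have [s' [r' [Ss' E]]] := oreR s Su.
apply: (@choose2P (fun cd : R * R => s * cd.1 = u * cd.2 /\ S (s * cd.1))).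
by exists (s', r'); split => //; apply: SM.
Qed.
Definition addp (p q : R * R) := let cd := addw p.2 q.2 in (p.1 * cd.1 + q.1 * cd.2, p.2 * cd.1).

Definition mulw b s := choose2 (fun tb => b * tb.1 = s * tb.2 /\ S tb.1).
Lemma mulwP b s : S s -> b * (mulw b s).1 = s * (mulw b s).2 /\ S (mulw b s).1.
Proof.
move=> Ss; have [s' [r' [Ss' E]]] := oreR b Ss.
apply: (@choose2P (fun tb : R * R => b * tb.1 = s * tb.2 /\ S tb.1)).
by exists (s', r').
Qed.
Definition mulp (p q : R * R) := let tb := mulw q.1 p.2 in (p.1 * tb.2, q.2 * tb.1).
Definition oppp (p : R * R) := (- p.1, p.2).

Lemma addp_good p q : S p.2 -> S q.2 -> S (addp p q).2.
Proof. by move=> H1 H2; case: (addwP H1 H2). Qed.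
Lemma mulp_good p q : S p.2 -> S q.2 -> S (mulp p q).2.
Proof. by move=> H1 H2; case: (mulwP q.1 H1) => _ H; apply: SM. Qed.

Lemma AW a s b u c d v : S s -> S u -> S v -> I (s * c - v) -> I (u * d - v) ->
  Ep (addp (a, s) (b, u)) (a * c + b * d, v).
Proof.
move=> Ss Su Sv Hc Hd; case: (addwP Ss Su); rewrite /addp /Ep /=.
case: (addw s u) => c0 d0 /= E0 _ x y Hxy.
have hc : I (c0 * x - c * y).
  apply: (Iregl' Ss); rewrite !mulrA; apply: (Itrans Hxy); apply: Isym; exact: Icr.
have hd : I (d0 * x - d * y).
  apply: (Iregl' Su); rewrite !mulrA -E0; apply: (Itrans Hxy); apply: Isym; exact: Icr.
by rewrite !mulrDl -!mulrA; apply: IDD; apply: Icl.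
Qed.

Lemma add_wd1 a s a' s' b u : S s -> S s' -> S u -> Ep (a, s) (a', s') ->
  Ep (addp (a, s) (b, u)) (addp (a', s') (b, u)).
Proof.
move=> Ss Ss' Su HE; case: (addwP Ss Su); case: (addwP Ss' Su); rewrite /addp /Ep /=.
case: (addw s u) => c0 d0; case: (addw s' u) => c1 d1 /= E1 _ E0 _ x y H.
have h1 : I (a * (c0 * x) - a' * (c1 * y)) by apply: HE; rewrite !mulrA.
have h2 : I (d0 * x - d1 * y) by apply: (Iregl' Su); rewrite !mulrA -E0 -E1.
by rewrite !mulrDl -!mulrA; apply: IDD => //; apply: Icl.
Qed.

Lemma add_comm_rep a s b u : S s -> S u -> Ep (addp (a, s) (b, u)) (addp (b, u) (a, s)).
Proof.
move=> Ss Su; case: (addwP Su Ss); rewrite {2}/addp /=.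
case: (addw u s) => c1 d1 /= E1 S1'.
rewrite addrC; apply: AW => //; first by apply: Ieq.
by rewrite subrr; exact: I0.
Qed.

Lemma Ep_trans p q r : S q.2 -> Ep p q -> Ep q r -> Ep p r.
Proof. by move=> Sq; apply: E4_trans. Qed.
Lemma Ep_sym p q : Ep p q -> Ep q p.
Proof. exact: E4_sym. Qed.

Lemma add_wd2 a s b u b' u' : S s -> S u -> S u' -> Ep (b, u) (b', u') ->
  Ep (addp (a, s) (b, u)) (addp (a, s) (b', u')).
Proof.
move=> Ss Su Su' HE.
apply: (Ep_trans (q := addp (b, u) (a, s)) (addp_good (p := (b, u)) (q := (a, s)) Su Ss)).
  exact: add_comm_rep.
apply: (Ep_trans (q := addp (b', u') (a, s)) (addp_good (p := (b', u')) (q := (a, s)) Su' Ss)).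
  exact: add_wd1.
exact: add_comm_rep.
Qed.

Lemma MW a s b u t' b' : S s -> S u -> S t' -> I (b * t' - s * b') ->
  Ep (mulp (a, s) (b, u)) (a * b', u * t').
Proof.
move=> Ss Su St' Hb; case: (mulwP b Ss); rewrite /mulp /Ep /=.
case: (mulw b s) => t0 b0 /= E0 St0 x y H.
have h : I (t0 * x - t' * y) by apply: (Iregl' Su); rewrite !mulrA.
have h2 : I (s * (b0 * x) - s * (b' * y)).
  apply: (Itrans (y := b * (t0 * x))); first by apply: Ieq; rewrite !mulrA E0.
  apply: (Itrans (y := b * (t' * y))); first exact: Icl.
  by rewrite !mulrA; apply: Icr.
by rewrite -!mulrA; apply: Icl; apply: (Iregl' Ss).
Qed.

Lemma mul_wd1 a s a' s' b u : S s -> S s' -> S u -> Ep (a, s) (a', s') ->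
  Ep (mulp (a, s) (b, u)) (mulp (a', s') (b, u)).
Proof.
move=> Ss Ss' Su HE; case: (mulwP b Ss); case: (mulwP b Ss'); rewrite /mulp /Ep /=.
case: (mulw b s) => t0 b0; case: (mulw b s') => t1 b1 /= E1 _ E0 _ x y H.
have h : I (t0 * x - t1 * y) by apply: (Iregl' Su); rewrite !mulrA.
rewrite -!mulrA; apply: HE; rewrite !mulrA -E0 -E1 -!mulrA; exact: Icl.
Qed.

Lemma mul_wd2 a s b u b' u' : S s -> S u -> S u' -> Ep (b, u) (b', u') ->
  Ep (mulp (a, s) (b, u)) (mulp (a, s) (b', u')).
Proof.
move=> Ss Su Su' HE; case: (mulwP b Ss); case: (mulwP b' Ss); rewrite /mulp /Ep /=.
case: (mulw b s) => t0 b0; case: (mulw b' s) => t1 b1 /= E1 _ E0 _ x y H.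
have h : I (b * (t0 * x) - b' * (t1 * y)) by apply: HE; rewrite !mulrA.
rewrite -!mulrA; apply: Icl; apply: (Iregl' Ss); rewrite !mulrA -E0 -E1 -!mulrA; exact: h.
Qed.

Lemma opp_wd a s a' s' : Ep (a, s) (a', s') -> Ep (oppp (a, s)) (oppp (a', s')).
Proof. by move=> HE x y H; rewrite /= !mulNr; apply: INN; apply: HE. Qed.

End Loc.

Definition Qt (R : pzRingType) (S : R -> Prop) (HS : ore_set S) := {eq_quot (eqvR HS)}%qT.

Section Loc2.
Variables (R : pzRingType) (S : R -> Prop).
Hypothesis HS : ore_set S.
Local Notation I := (pS S).
Local Notation Q := (Qt HS).
Local Notation pi := (\pi_Q)%qT.
Local Notation S1 := (S1 HS).
Local Notation Sn0 := (Sn0 HS).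
Local Notation SM := (SM HS).
Local Notation oreL := (oreL HS).
Local Notation oreR := (oreR HS).
Local Notation ID := (ID HS).
Local Notation IMl := (IMl HS).
Local Notation IMr := (IMr HS).
Local Notation IN := (IN HS).
Local Notation IB := (IB HS).
Local Notation Iregl := (Iregl HS).
Local Notation Iregr := (Iregr HS).
Local Notation cml := (cml HS).
Local Notation cmr := (cmr HS).
Local Notation Iinv := (Iinv HS).
Local Notation SnI := (SnI HS).
Local Notation Isym := (Isym HS).
Local Notation Itrans := (Itrans HS).
Local Notation Icl := (Icl HS).
Local Notation Icr := (Icr HS).
Local Notation IDD := (IDD HS).
Local Notation INN := (INN HS).
Local Notation Iregl' := (Iregl' HS).
Local Notation Iregr' := (Iregr' HS).
Local Notation E4_refl := (E4_refl HS).
Local Notation E4_sym := (E4_sym HS).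
Local Notation E4_trans := (E4_trans HS).
Local Notation addwP := (addwP HS).
Local Notation mulwP := (mulwP HS).
Local Notation addp_good := (addp_good HS).
Local Notation mulp_good := (mulp_good HS).
Local Notation AW := (AW HS).
Local Notation add_wd1 := (add_wd1 HS).
Local Notation add_comm_rep := (add_comm_rep HS).
Local Notation Ep_trans := (Ep_trans HS).
Local Notation Ep_sym := (Ep_sym HS).
Local Notation add_wd2 := (add_wd2 HS).
Local Notation MW := (MW HS).
Local Notation mul_wd1 := (mul_wd1 HS).
Local Notation mul_wd2 := (mul_wd2 HS).
Local Notation opp_wd := (opp_wd HS).
Local Notation E4 := (E4 S).
Local Notation Ep := (Ep S).
Local Notation addw := (addw S).
Local Notation addp := (addp S).
Local Notation mulw := (mulw S).
Local Notation mulp := (mulp S).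

Lemma piE a s b u : S s -> S u -> (pi (a, s) = pi (b, u) <-> E4 a s b u).
Proof.
move=> Ss Su; split.
  by move/eqmodP => /asboolP; rewrite /= !nrm_id.
by move=> H; apply/eqmodP/asboolP; rewrite /= !nrm_id.
Qed.

Definition rp (x : Q) : R * R := nrm S (repr x).
Lemma rp_good x : S (rp x).2. Proof. exact: nrm_good. Qed.
Lemma rpK x : pi (rp x) = x.
Proof.
rewrite -[RHS]reprK; apply/eqmodP/asboolP; rewrite /rp nrm_nrm.
exact: (E4_refl _ (nrm_good _ _)). exact: HS.
Qed.

Lemma qind (P : Q -> Prop) : (forall a s, S s -> P (pi (a, s))) -> forall x, P x.
Proof. by move=> H x; rewrite -(rpK x); case: (rp x) (rp_good x) => a s /= Ss; apply: H. Qed.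

Lemma piE' p q : S p.2 -> S q.2 -> (pi p = pi q <-> Ep p q).
Proof. by case: p => a s; case: q => b u; apply: piE. Qed.

Lemma rp_E a s : S s -> Ep (rp (pi (a, s))) (a, s).
Proof. by move=> Ss; apply: (piE' (p := rp (pi (a, s))) (q := (a, s)) (rp_good _) Ss).1; exact: rpK. Qed.

Definition addq (x y : Q) : Q := pi (addp (rp x) (rp y)).
Definition mulq (x y : Q) : Q := pi (mulp (rp x) (rp y)).
Definition oppq (x : Q) : Q := pi (oppp (rp x)).
Definition zeroq : Q := pi (0, 1).
Definition oneq : Q := pi (1, 1).

Lemma addq_pi a s b u : S s -> S u -> addq (pi (a, s)) (pi (b, u)) = pi (addp (a, s) (b, u)).
Proof.
move=> Ss Su; rewrite /addq.
have := rp_E (a := a) Ss; have := rp_good (pi (a, s)).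
have := rp_E (a := b) Su; have := rp_good (pi (b, u)).
case: (rp (pi (b, u))) => b1 u1; case: (rp (pi (a, s))) => a1 s1 /= Su1 E2 Ss1 E1.
apply/(piE' (addp_good (p := (a1, s1)) (q := (b1, u1)) Ss1 Su1) (addp_good (p := (a, s)) (q := (b, u)) Ss Su)).
apply: (Ep_trans (q := addp (a, s) (b1, u1)) (addp_good (p := (a, s)) (q := (b1, u1)) Ss Su1)).
  exact: add_wd1.
exact: add_wd2.
Qed.

Lemma mulq_pi a s b u : S s -> S u -> mulq (pi (a, s)) (pi (b, u)) = pi (mulp (a, s) (b, u)).
Proof.
move=> Ss Su; rewrite /mulq.
have := rp_E (a := a) Ss; have := rp_good (pi (a, s)).
have := rp_E (a := b) Su; have := rp_good (pi (b, u)).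
case: (rp (pi (b, u))) => b1 u1; case: (rp (pi (a, s))) => a1 s1 /= Su1 E2 Ss1 E1.
apply/(piE' (mulp_good (p := (a1, s1)) (q := (b1, u1)) Ss1 Su1) (mulp_good (p := (a, s)) (q := (b, u)) Ss Su)).
apply: (Ep_trans (q := mulp (a, s) (b1, u1)) (mulp_good (p := (a, s)) (q := (b1, u1)) Ss Su1)).
  exact: mul_wd1.
exact: mul_wd2.
Qed.

Lemma oppq_pi a s : S s -> oppq (pi (a, s)) = pi (- a, s).
Proof.
move=> Ss; rewrite /oppq.
have := rp_E (a := a) Ss; have := rp_good (pi (a, s)).
case: (rp (pi (a, s))) => a1 s1 /= Ss1 E1.
by apply/piE' => //; apply: (opp_wd E1).
Qed.

Lemma AWq a s b u c d v : S s -> S u -> S v -> s * c = v -> u * d = v ->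
  addq (pi (a, s)) (pi (b, u)) = pi (a * c + b * d, v).
Proof.
move=> Ss Su Sv Hc Hd; rewrite addq_pi //; apply/piE' => //; first exact: addp_good.
by apply: AW => //; apply: Ieq.
Qed.

Lemma MWq a s b u t' b' : S s -> S u -> S t' -> b * t' = s * b' ->
  mulq (pi (a, s)) (pi (b, u)) = pi (a * b', u * t').
Proof.
move=> Ss Su St' Hb; rewrite mulq_pi //.
apply/(piE' (mulp_good (p := (a, s)) (q := (b, u)) Ss Su) (q := (a * b', u * t')) (SM Su St')).
by apply: MW => //; apply: Ieq.
Qed.

Lemma EXPq a s x : S s -> S (s * x) -> pi (a, s) = pi (a * x, s * x).
Proof.
move=> Ss Ssx; apply/piE => // c d H; rewrite -mulrA; apply: Icl.
by apply: (Iregl' Ss); rewrite mulrA.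
Qed.

Lemma piI a a' s : S s -> I (a - a') -> pi (a, s) = pi (a', s).
Proof.
move=> Ss Ha; apply/piE => // c d H.
have h : I (c - d) by apply: (Iregl' Ss).
have h1 : I (a * c - a * d) by apply: Icl.
by apply: (Itrans h1); apply: Icr.
Qed.

Lemma comden s u : S s -> S u -> exists c d, S (s * c) /\ s * c = u * d.
Proof. by move=> Ss Su; have [s' [r' [Ss' E]]] := oreR s Su; exists s', r'; split => //; apply: SM. Qed.

Lemma addqA : associative addq.
Proof.
elim/qind => a s Ss; elim/qind => b u Su; elim/qind => e w Sw.
have [c1 [d1 [Sv1 E1]]] := comden Ss Su.
have [c2 [g [Sv E2]]] := comden Sv1 Sw.
rewrite (AWq a b Ss Su Sv1 erefl (esym E1)) (AWq _ e Sv1 Sw Sv erefl (esym E2)).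
rewrite (AWq b e Su Sw Sv (c := d1 * c2) (d := g)); last by rewrite -E2.
  2: by rewrite mulrA -E1.
rewrite (AWq a _ Ss Sv Sv (c := c1 * c2) (d := 1)); first last.
- by rewrite mulr1.
- by rewrite mulrA.
by rewrite !mulr1 mulrDl !mulrA addrA.
Qed.

Lemma addqC : commutative addq.
Proof.
elim/qind => a s Ss; elim/qind => b u Su.
have [c [d [Sv E]]] := comden Ss Su.
rewrite (AWq a b Ss Su Sv erefl (esym E)) (AWq b a Su Ss Sv (esym E) erefl).
by rewrite addrC.
Qed.

Lemma add0q : left_id zeroq addq.
Proof.
elim/qind => a s Ss; rewrite /zeroq (AWq 0 a S1 Ss Ss (c := s) (d := 1)) ?mul1r ?mulr1 //.
by rewrite mul0r add0r.
Qed.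

Lemma addNq : left_inverse zeroq oppq addq.
Proof.
elim/qind => a s Ss; rewrite oppq_pi // (AWq (- a) a Ss Ss Ss (c := 1) (d := 1)) ?mulr1 //.
rewrite addNr /zeroq; apply/(piE 0 0 Ss S1) => c d _; rewrite !mul0r subrr; exact: I0.
Qed.

Lemma mulqA : associative mulq.
Proof.
elim/qind => a s Ss; elim/qind => b u Su; elim/qind => e w Sw.
case: (mulwP b Ss); set t1 := (mulw b s).1; set b1 := (mulw b s).2 => E1 St1.
rewrite (MWq a Ss Su St1 E1).
have [t2 [e2 [St2 E2]]] := oreR e (SM Su St1).
rewrite (MWq (a * b1) (SM Su St1) Sw St2 E2).
rewrite (MWq b (b' := t1 * e2) Su Sw St2); last by rewrite mulrA -E2.
rewrite (MWq a (b' := b1 * e2) Ss (SM Sw St2) S1); last by rewrite mulr1 mulrA E1 mulrA.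
by rewrite mulr1 mulrA.
Qed.

Lemma mul1q : left_id oneq mulq.
Proof.
by elim/qind => a s Ss; rewrite /oneq (MWq 1 S1 Ss S1 (b' := a)) ?mulr1 ?mul1r.
Qed.

Lemma mulq1 : right_id oneq mulq.
Proof.
by elim/qind => a s Ss; rewrite /oneq (MWq a Ss S1 Ss (b' := 1)) ?mulr1 ?mul1r.
Qed.

Lemma mulqDl : left_distributive mulq addq.
Proof.
elim/qind => a s Ss; elim/qind => b u Su; elim/qind => e w Sw.
have [c [d [Sv E]]] := comden Ss Su.
rewrite (AWq a b Ss Su Sv erefl (esym E)).
have [t [e' [St Et]]] := oreR e Sv.
rewrite (MWq _ Sv Sw St Et).
rewrite (MWq a (b' := c * e') Ss Sw St); last by rewrite mulrA Et.
rewrite (MWq b (b' := d * e') Su Sw St); last by rewrite mulrA -E Et.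
rewrite (AWq _ _ (SM Sw St) (SM Sw St) (SM Sw St) (c := 1) (d := 1)) ?mulr1 //.
by rewrite mulrDl !mulrA.
Qed.

Lemma mulqDr : right_distributive mulq addq.
Proof.
elim/qind => a s Ss; elim/qind => b u Su; elim/qind => e w Sw.
have [c [d [Sv E]]] := comden Su Sw.
rewrite (AWq b e Su Sw Sv erefl (esym E)).
have [t1 [b1 [St1 E1]]] := oreR (b * c) Ss.
have [t2 [e2 [St2 E2]]] := oreR (e * d * t1) Ss.
have Sv12 : S (u * c * (t1 * t2)) by apply: SM => //; apply: SM.
rewrite (EXPq (b * c + e * d) Sv Sv12).
rewrite (MWq a (b' := b1 * t2 + e2) Ss Sv12 S1); last first.
  by rewrite mulr1 mulrDl mulrDr !mulrA E1 E2.
have Su' : S (u * (c * (t1 * t2))) by rewrite mulrA.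
have Sw' : S (w * (d * (t1 * t2))) by rewrite mulrA -E.
rewrite (EXPq b Su Su') (EXPq e Sw Sw').
rewrite (MWq a (b' := b1 * t2) Ss Su' S1); last by rewrite mulr1 !mulrA E1.
rewrite (MWq a (b' := e2) Ss Sw' S1); last by rewrite mulr1 !mulrA E2.
rewrite !mulr1 !mulrA -E.
have Sv3 : S (u * c * t1 * t2) by move: Sv12; rewrite !mulrA.
rewrite (AWq _ _ Sv3 Sv3 Sv3 (c := 1) (d := 1)) ?mulr1 //.
by rewrite mulrDr !mulrA.
Qed.

End Loc2.

HB.instance Definition _ (R : pzRingType) (S : R -> Prop) (HS : ore_set S) :=
  Choice.on (Qt HS).
HB.instance Definition _ (R : pzRingType) (S : R -> Prop) (HS : ore_set S) :=
  GRing.isZmodule.Build (Qt HS) (@addqA R S HS) (@addqC R S HS) (@add0q R S HS) (@addNq R S HS).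
HB.instance Definition _ (R : pzRingType) (S : R -> Prop) (HS : ore_set S) :=
  GRing.Zmodule_isPzRing.Build (Qt HS) (@mulqA R S HS) (@mul1q R S HS) (@mulq1 R S HS) (@mulqDl R S HS) (@mulqDr R S HS).

Definition fQ (R : pzRingType) (S : R -> Prop) (HS : ore_set S) (r : R) : Qt HS :=
  (\pi_(Qt HS) (r, 1))%qT.

Section Loc3.
Variables (R : pzRingType) (S : R -> Prop).
Hypothesis HS : ore_set S.
Local Notation I := (pS S).
Local Notation Q := (Qt HS).
Local Notation pi := (\pi_Q)%qT.

Lemma q0E : (0 : Q) = pi (0, 1). Proof. by []. Qed.
Lemma q1E : (1 : Q) = pi (1, 1). Proof. by []. Qed.
Lemma qaddE (x y : Q) : x + y = addq x y. Proof. by []. Qed.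
Lemma qmulE (x y : Q) : x * y = mulq x y. Proof. by []. Qed.
Lemma qoppE (x : Q) : - x = oppq x. Proof. by []. Qed.

Lemma fQ_zmod : zmod_morphism (fQ HS).
Proof.
move=> a b; rewrite /fQ qaddE qoppE (oppq_pi HS _ (S1 HS)).
by rewrite (AWq HS a (- b) (S1 HS) (S1 HS) (S1 HS) (c := 1) (d := 1)) ?mulr1.
Qed.

Lemma fQ_mon : monoid_morphism (fQ HS).
Proof.
split; first by [].
move=> a b; rewrite /fQ qmulE.
by rewrite (MWq HS a (S1 HS) (S1 HS) (S1 HS) (b' := b)) ?mulr1 ?mul1r.
Qed.

End Loc3.

HB.instance Definition _ (R : pzRingType) (S : R -> Prop) (HS : ore_set S) :=
  GRing.isZmodMorphism.Build R (Qt HS) (fQ HS) (fQ_zmod HS).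
HB.instance Definition _ (R : pzRingType) (S : R -> Prop) (HS : ore_set S) :=
  GRing.isMonoidMorphism.Build R (Qt HS) (fQ HS) (fQ_mon HS).


Definition uinv (Q : pzRingType) (u : Q) : Q :=
  match pselect (is_unit u) with left H => proj1_sig (cid H) | right _ => 0 end.

Lemma uinvP (Q : pzRingType) (u : Q) : is_unit u -> u * uinv u = 1 /\ uinv u * u = 1.
Proof. by rewrite /uinv; case: pselect => // H _; exact: proj2_sig (cid H). Qed.

Lemma uinv_r (Q : pzRingType) (u v : Q) : is_unit u -> u * v = 1 -> uinv u = v.
Proof.
move=> Hu Huv; have [_ H2] := uinvP Hu.
by rewrite -[uinv u]mulr1 -Huv mulrA H2 mul1r.
Qed.

Lemma uinv_l (Q : pzRingType) (u v : Q) : is_unit u -> v * u = 1 -> uinv u = v.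
Proof.
move=> Hu Hvu; have [H1 _] := uinvP Hu.
by rewrite -[uinv u]mul1r -Hvu -mulrA H1 mulr1.
Qed.

Section Loc4.
Variables (R : pzRingType) (S : R -> Prop).
Hypothesis HS : ore_set S.
Local Notation I := (pS S).
Local Notation Q := (Qt HS).
Local Notation pi := (\pi_Q)%qT.
Variables (Q' : pzRingType) (f' : {rmorphism R -> Q'}).
Hypothesis Hf : S_inverting S f'.

Lemma fkill x : I x -> f' x = 0.
Proof.
elim=> {x} [|x a b s t Ss St _ H1 _ H2 _ H3]; first exact: rmorph0.
have Ha : f' a = 0.
  have [_ Hi] := uinvP (Hf Ss).
  by rewrite -[f' a]mul1r -Hi -mulrA -rmorphM H2 mulr0.
have Hb : f' b = 0.
  have [Hi _] := uinvP (Hf St).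
  by rewrite -[f' b]mulr1 -Hi mulrA -rmorphM H3 mul0r.
have : f' (x - (a + b)) = 0 by [].
by rewrite rmorphB rmorphD Ha Hb addr0 subr0.
Qed.

Lemma fkill_eq x y : I (x - y) -> f' x = f' y.
Proof. by move/fkill; rewrite rmorphB => /eqP; rewrite subr_eq0 => /eqP. Qed.

Definition hval (p : R * R) : Q' := f' p.1 * uinv (f' p.2).

Lemma inv_split s c : S s -> S (s * c) -> uinv (f' s) = f' c * uinv (f' (s * c)).
Proof.
move=> Ss Ssc; apply: uinv_r (Hf Ss) _.
by rewrite mulrA -rmorphM; case: (uinvP (Hf Ssc)).
Qed.

Lemma hval_wd a s b u : S s -> S u -> E4 S a s b u -> hval (a, s) = hval (b, u).
Proof.
move=> Ss Su HE; have [c [d [Sv E]]] := comden HS Ss Su.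
have h : f' (a * c) = f' (b * d).
  by apply: fkill_eq; apply: HE; rewrite E subrr; exact: pS_zero.
rewrite /hval /= (inv_split Ss Sv) (inv_split Su (s := u) (c := d)); last by rewrite -E.
by rewrite !mulrA -!rmorphM h E.
Qed.

Definition hQ (q : Q) : Q' := let _ := Hf in hval (rp q).

Lemma hQ_pi a s : S s -> hQ (pi (a, s)) = hval (a, s).
Proof.
move=> Ss; rewrite /hQ /=; have := rp_E (HS := HS) (a := a) Ss; have := rp_good (pi (a, s)).
case: (rp (pi (a, s))) => a1 s1 /= Ss1; exact: hval_wd.
Qed.

Lemma hQ_zmod : zmod_morphism hQ.
Proof.
elim/(@qind _ _ HS) => a s Ss; elim/(@qind _ _ HS) => b u Su.
rewrite qaddE qoppE (oppq_pi HS _ Su).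
have [c [d [Sv E]]] := comden HS Ss Su.
rewrite (AWq HS a (- b) Ss Su Sv erefl (esym E)) !hQ_pi // /hval /=.
rewrite (inv_split Ss Sv) (inv_split Su (s := u) (c := d)); last by rewrite -E.
by rewrite E !mulrA -!rmorphM rmorphD mulrDl mulNr rmorphN mulNr.
Qed.

Lemma hQ_mon : monoid_morphism hQ.
Proof.
split.
  rewrite q1E hQ_pi; last exact: (S1 HS). rewrite /hval /=.
  exact: (uinvP (Hf (S1 HS))).1.
elim/(@qind _ _ HS) => a s Ss; elim/(@qind _ _ HS) => b u Su.
rewrite qmulE; case: (mulwP HS b Ss); set t1 := (mulw S b s).1; set b1 := (mulw S b s).2 => E1 St1.
rewrite (MWq HS a Ss Su St1 E1) !hQ_pi //; last exact: (SM HS).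
rewrite /hval /=.
have Ht : uinv (f' (u * t1)) = uinv (f' t1) * uinv (f' u).
  apply: uinv_r; first by apply: Hf; apply: (SM HS).
  rewrite rmorphM -mulrA (mulrA (f' t1)); case: (uinvP (Hf St1)) => -> _.
  by rewrite mul1r; case: (uinvP (Hf Su)).
have Hb : uinv (f' s) * f' b = f' b1 * uinv (f' t1).
  rewrite -[LHS]mulr1; case: (uinvP (Hf St1)) => <- _.
  by rewrite !mulrA -(mulrA _ (f' b)) -rmorphM E1 rmorphM mulrA; case: (uinvP (Hf Ss)) => _ ->; rewrite mul1r.
by rewrite Ht rmorphM -!mulrA (mulrA (uinv (f' s))) Hb !mulrA.
Qed.

End Loc4.

HB.instance Definition _ (R : pzRingType) (S : R -> Prop) (HS : ore_set S)
  (Q' : pzRingType) (f' : {rmorphism R -> Q'}) (Hf : S_inverting S f') :=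
  GRing.isZmodMorphism.Build (Qt HS) Q' (@hQ R S HS Q' f' Hf) (@hQ_zmod R S HS Q' f' Hf).
HB.instance Definition _ (R : pzRingType) (S : R -> Prop) (HS : ore_set S)
  (Q' : pzRingType) (f' : {rmorphism R -> Q'}) (Hf : S_inverting S f') :=
  GRing.isMonoidMorphism.Build (Qt HS) Q' (@hQ R S HS Q' f' Hf) (@hQ_mon R S HS Q' f' Hf).

Section Loc5.
Variables (R : pzRingType) (S : R -> Prop).
Hypothesis HS : ore_set S.
Local Notation I := (pS S).
Local Notation Q := (Qt HS).
Local Notation pi := (\pi_Q)%qT.

Lemma pi_fac a s : S s -> (pi (a, s) : Q) = fQ HS a * (pi (1, s) : Q).
Proof.
move=> Ss; rewrite qmulE /fQ (MWq HS a (S1 HS) Ss (S1 HS) (b' := 1)) ?mulr1 //.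
Qed.

Lemma inv_fQ_l s : S s -> (pi (1, s) : Q) * fQ HS s = 1.
Proof.
move=> Ss; rewrite qmulE /fQ (MWq HS 1 Ss (S1 HS) (S1 HS) (b' := 1)) ?mulr1 //.
Qed.

Lemma inv_fQ_r s : S s -> fQ HS s * (pi (1, s) : Q) = 1.
Proof.
move=> Ss; rewrite qmulE /fQ (MWq HS s (S1 HS) Ss (S1 HS) (b' := 1)) ?mulr1 //.
rewrite q1E; apply: (proj2 (piE HS _ _ Ss (S1 HS))) => c d; exact.
Qed.

Lemma fQ_unit s : S s -> is_unit (fQ HS s).
Proof. by move=> Ss; exists ((pi (1, s) : Q)); split; [apply: inv_fQ_r | apply: inv_fQ_l]. Qed.

Lemma univ_uniq (Q' : pzRingType) (f' : {rmorphism R -> Q'}) (Hf : S_inverting S f')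
  (g : {rmorphism Q -> Q'}) : (forall r, f' r = g (fQ HS r)) -> forall q, g q = hQ Hf q.
Proof.
move=> Hg; elim/(@qind _ _ HS) => a s Ss.
rewrite hQ_pi // /hval /= (pi_fac a Ss) rmorphM -Hg; congr (_ * _).
apply: esym. apply: (uinv_l (Hf _ Ss)).
by rewrite Hg -rmorphM inv_fQ_l // rmorph1.
Qed.

Lemma univ_comp (Q' : pzRingType) (f' : {rmorphism R -> Q'}) (Hf : S_inverting S f') r :
  f' r = hQ Hf (fQ HS r).
Proof.
rewrite /fQ hQ_pi; last exact: (S1 HS).
rewrite /hval /= -[LHS]mulr1; congr (_ * _); apply: esym.
apply: uinv_r (Hf _ (S1 HS)) _; rewrite mulr1; exact: rmorph1.
Qed.

Lemma univ : universal_S_inverting S (fQ HS).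
Proof.
split; first by move=> s Ss; apply: fQ_unit.
move=> Q' f' Hf; exists (hQ Hf : {rmorphism Q -> Q'}); split.
  exact: univ_comp.
move=> h' Hh' q; exact: univ_uniq.
Qed.

End Loc5.

Section Loc6.
Variables (R : pzRingType) (S : R -> Prop).
Hypothesis HS : ore_set S.
Local Notation I := (pS S).
Local Notation Q := (Qt HS).
Local Notation pi := (\pi_Q)%qT.
Variables (A : pzRingType) (piA : {rmorphism R -> A}).
Hypothesis surj : forall a : A, exists r, piA r = a.
Hypothesis kern : forall r, piA r = 0 <-> pS S r.

Definition liftA (a : A) : R := proj1_sig (cid (surj a)).
Lemma liftA_spec a : piA (liftA a) = a.
Proof. exact: proj2_sig (cid (surj a)). Qed.

Definition phiA (a : A) : Q := let _ := kern in fQ HS (liftA a).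

Lemma fQ_cong r r' : piA r = piA r' -> fQ HS r = fQ HS r'.
Proof.
move=> H; rewrite /fQ; apply: (piI HS (S1 HS)); apply/kern.
by rewrite rmorphB H subrr.
Qed.

Lemma phiA_pi r : phiA (piA r) = fQ HS r.
Proof. by rewrite /phiA /=; apply: fQ_cong; rewrite liftA_spec. Qed.

Lemma phiA_zmod : zmod_morphism phiA.
Proof.
move=> x y; case: (surj x) => r <-; case: (surj y) => r' <-.
by rewrite -rmorphB !phiA_pi rmorphB.
Qed.

Lemma phiA_mon : monoid_morphism phiA.
Proof.
split; first by rewrite -(rmorph1 piA) phiA_pi rmorph1.
move=> x y; case: (surj x) => r <-; case: (surj y) => r' <-.
by rewrite -rmorphM !phiA_pi rmorphM.
Qed.

End Loc6.

HB.instance Definition _ (R : pzRingType) (S : R -> Prop) (HS : ore_set S)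
  (A : pzRingType) (piA : {rmorphism R -> A}) (surj : forall a : A, exists r, piA r = a)
  (kern : forall r, piA r = 0 <-> pS S r) :=
  GRing.isZmodMorphism.Build A (Qt HS) (@phiA R S HS A piA surj kern) (@phiA_zmod R S HS A piA surj kern).
HB.instance Definition _ (R : pzRingType) (S : R -> Prop) (HS : ore_set S)
  (A : pzRingType) (piA : {rmorphism R -> A}) (surj : forall a : A, exists r, piA r = a)
  (kern : forall r, piA r = 0 <-> pS S r) :=
  GRing.isMonoidMorphism.Build A (Qt HS) (@phiA R S HS A piA surj kern) (@phiA_mon R S HS A piA surj kern).

Section Loc7.
Variables (R : pzRingType) (S : R -> Prop).
Hypothesis HS : ore_set S.
Local Notation I := (pS S).
Local Notation Q := (Qt HS).
Local Notation pi := (\pi_Q)%qT.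
Variables (A : pzRingType) (piA : {rmorphism R -> A}).
Hypothesis surj : forall a : A, exists r, piA r = a.
Hypothesis kern : forall r, piA r = 0 <-> pS S r.
Local Notation T := (image_of piA S).

Lemma T_ore : ore_set T.
Proof.
split.
  split.
  - by exists 1; split; [exact: (S1 HS) | exact: rmorph1].
  - by case=> s [Ss /kern H]; exact: (SnI HS Ss H).
  - move=> _ _ [s [Ss <-]] [t [St <-]]; exists (s * t); split; first exact: (SM HS).
    exact: rmorphM.
move=> r _ [s [Ss <-]]; case: (surj r) => r0 <-; split.
  have [s' [r' [Ss' E]]] := oreL HS r0 Ss.
  by exists (piA s'), (piA r'); split; [exists s' | rewrite -!rmorphM E].
have [s' [r' [Ss' E]]] := oreR HS r0 Ss.
by exists (piA s'), (piA r'); split; [exists s' | rewrite -!rmorphM E].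
Qed.

Lemma T_reg a : T a -> regular a.
Proof.
case=> s [Ss <-] x; case: (surj x) => r <-; split.
  by rewrite -rmorphM => /kern H; apply/kern; exact: (Iregl HS Ss H).
by rewrite -rmorphM => /kern H; apply/kern; exact: (Iregr HS Ss H).
Qed.

Lemma T1 : T 1. Proof. by exists 1; split; [exact: (S1 HS) | exact: rmorph1]. Qed.

Lemma T_den : denominator_set T.
Proof.
split; first exact: T_ore.
move=> r s Ts; split.
  by move=> H; exists 1; split; [exact: T1 | rewrite mul1r; case: (T_reg Ts r) => _ /(_ H) ->].
by move=> H; exists 1; split; [exact: T1 | rewrite mulr1; case: (T_reg Ts r) => /(_ H) -> _].
Qed.

Lemma fQ_kill r : pS S r -> fQ HS r = 0.
Proof. by move=> H; rewrite /fQ q0E; apply: (piI HS (S1 HS)); rewrite subr0. Qed.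

Lemma fQ_zero r : fQ HS r = 0 -> pS S r.
Proof.
rewrite /fQ q0E => /(piE HS _ _ (S1 HS) (S1 HS)) H.
have := H 1 1; rewrite subrr mulr1 mul0r subr0; apply; exact: pS_zero.
Qed.

Lemma T_loc : is_localization T (phiA HS surj kern : {rmorphism A -> Q}).
Proof.
split.
- move=> _ [s [Ss <-]]; rewrite /= phiA_pi; exact: fQ_unit.
- elim/(@qind _ _ HS) => a s Ss.
  exists (piA a), (piA s), (pi (1, s) : Q); split.
  + by exists s.
  + by rewrite /= phiA_pi; apply: inv_fQ_r.
  + by rewrite /= phiA_pi; apply: inv_fQ_l.
  + by rewrite /= phiA_pi; apply: pi_fac.
- elim/(@qind _ _ HS) => a s Ss.
  have [s' [r' [Ss' Ea]]] := oreL HS a Ss.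
  exists (piA r'), (piA s'), (pi (1, s') : Q); split.
  + by exists s'.
  + by rewrite /= phiA_pi; apply: inv_fQ_r.
  + by rewrite /= phiA_pi; apply: inv_fQ_l.
  + rewrite /= phiA_pi qmulE /fQ (MWq HS 1 Ss' (S1 HS) Ss (b' := a)); last by rewrite Ea.
    by rewrite !mul1r.
- move=> x; case: (surj x) => r <-; rewrite /= phiA_pi; split.
    by move/fQ_zero => /kern H; exists 1; split; [exact: T1 | rewrite mulr1].
  case=> _ [[s [Ss <-]] H]; apply: fQ_kill; apply: (Iregr HS Ss); apply/kern.
  by rewrite rmorphM.
- move=> x; case: (surj x) => r <-; rewrite /= phiA_pi; split.
    by move/fQ_zero => /kern H; exists 1; split; [exact: T1 | rewrite mul1r].
  case=> _ [[s [Ss <-]] H]; apply: fQ_kill; apply: (Iregl HS Ss); apply/kern.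
  by rewrite rmorphM.
Qed.

End Loc7.

Unset Implicit Arguments.
Unset Strict Implicit.

Theorem corollary4p16 (R : pzRingType) (S : R -> Prop) :
  ore_set S ->
  exists (Q : pzRingType) (f : {rmorphism R -> Q}),
    [/\ universal_S_inverting S f,
        (forall (Q2 : pzRingType) (f2 : {rmorphism R -> Q2}),
           universal_S_inverting S f2 -> ring_isomorphic Q Q2) &
        forall (A : pzRingType) (pi : {rmorphism R -> A}),
          (forall a : A, exists r, pi r = a) ->
          (forall r, pi r = 0 <-> pS S r) ->
          [/\ denominator_set (image_of pi S),
              (forall a, image_of pi S a -> regular a) &
              exists phi : {rmorphism A -> Q},
                is_localization (image_of pi S) phi]].
Proof.
move=> HS; exists (Qt HS), (fQ HS); split.
- exact: univ.
- move=> Q2 f2 [Hinv2 U2].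
  have [Hinv U] := univ HS.
  have [h [Hh _]] := U Q2 f2 Hinv2.
  have [g [Hg _]] := U2 (Qt HS) (fQ HS) Hinv.
  have [k [_ Uk]] := U (Qt HS) (fQ HS) Hinv.
  have [k2 [_ Uk2]] := U2 Q2 f2 Hinv2.
  exists h, g.
  + move=> q.
    have e1 : (g \o h) q = k q by apply: Uk => r /=; rewrite -Hh -Hg.
    have e2 : idfun q = k q by apply: Uk.
    exact: (etrans e1 (esym e2)).
  + move=> q.
    have e1 : (h \o g) q = k2 q by apply: Uk2 => r /=; rewrite -Hg -Hh.
    have e2 : idfun q = k2 q by apply: Uk2.
    exact: (etrans e1 (esym e2)).
- move=> A piA surj kern; split.
  + exact: T_den.
  + exact: T_reg.
  + by exists (phiA HS surj kern); apply: T_loc.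
Qed.
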